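(* Let $S_m$ be the model sphere of revolution and let $f\colon(-1,1)\to\mathbb{R}$ be the rotation function of the first return map to the Birkhoff annulus $A$ of the minimal parallel, as described in the context. Then $f$ is strictly decreasing on $(-1,1)$.
   Context: A sphere of revolution $S\subset\mathbb{R}^3$ is a surface diffeomorphic to $S^2$ invariant under rotations about the $z$-axis. Its intersection with the $(x,z)$-half-plane is parametrized by arclength by a closed curve $\sigma(s)=(r(s),z(s))$, $s\in\mathbb{R}/M\mathbb{Z}$ ($M$ its length), positively oriented, with $\sigma(0)$ the lower intersection point with the $z$-axis. Coordinates $\Phi(s,\theta)=(r(s)\cos\theta,r(s)\sin\theta,z(s))$, $s\in(0,M/2)$, $\theta\in\mathbb{R}/2\pi\mathbb{Z}$; the induced metric is $ds^2+r(s)^2d\theta^2$. The parallel $P_{s_0}$ is the curve $\theta\mapsto\Phi(s_0,\theta)$. The model sphere $S_m$ is a sphere of revolution with: $M>2\pi$; $r(s)=\sin s$ for $s\in[0,\pi/2]$; $\sigma$ symmetric with respect to the $x$-axis (so $S_m$ is symmetric under $z\mapsto -z$); and $r|_{(0,M/2)}$ has exactly three critical points: maxima at $s=\pi/2$ and $s=M/2-\pi/2$ with value $1$, and a minimum at $s=M/4$ with value $r_{min}\in(0,1)$. Unit tangent vectors over $\Phi(s,\theta)$ are described by the angle $\beta\in\mathbb{R}/2\pi\mathbb{Z}$ from $\partial_\theta$ to the vector; in coordinates $(s,\theta,\beta)$ the geodesic flow is $s'=\sin\beta$, $\beta'=\frac{r'(s)}{r(s)}\cos\beta$, $\theta'=\frac{\cos\beta}{r(s)}$.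 The Birkhoff annulus of $P_{M/4}$ is $A=\{(\Phi(M/4,\theta),\beta):\theta\in\mathbb{R}/2\pi\mathbb{Z},\ \beta\in(0,\pi)\}$, parametrized by $(x,\eta)$ with $x\in\mathbb{R}/L\mathbb{Z}$ the arclength along $P_{M/4}$ ($L=2\pi r_{min}$) and $\eta=-\cos\beta\in(-1,1)$. Every geodesic flow line through $A$ is transverse to $A$ and returns to $A$; by invariance of the Clairaut integral $r(s)\cos\beta$ and rotational symmetry, the first return map has the form $\rho(x,\eta)=(x+f(\eta)\bmod L,\ \eta)$, where $f\colon(-1,1)\to\mathbb{R}$ is the continuous function with $f(0)=0$ (the points $(x,0)$ lie on meridians, which are closed geodesics). *)

(* Defs.v *)
From Stdlib Require Import Reals Lra.
From Coquelicot Require Import Coquelicot.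
Open Scope R_scope.

Definition smooth (f : R -> R) : Prop := forall (n : nat) (x : R), ex_derive_n f n x.

(* The meridian curve sigma(s) = (r s, z s), s in R/MZ, parametrized by
   arclength, of a sphere of revolution S (the full intersection of S with the
   (x,z)-plane; the half s in (0,M/2) lies in the half-plane x > 0).
   sigma(0) is the lower intersection point with the z-axis, sigma(M/2) the
   upper one; positively oriented means that sigma first goes into x > 0. *)
Definition sphere_of_revolution (M : R) (r z : R -> R) : Prop :=
  0 < M /\ smooth r /\ smooth z /\
  (forall s, r (s + M) = r s /\ z (s + M) = z s) /\
  (forall s, (Derive r s) ^ 2 + (Derive z s) ^ 2 = 1) /\
  (* rotation invariance: sigma is symmetric w.r.t. the z-axis *)
  (forall s, r (- s) = - r s /\ z (- s) = z s) /\
  (forall s1 s2, 0 <= s1 < M -> 0 <= s2 < M -> r s1 = r s2 -> z s1 = z s2 -> s1 = s2) /\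
  r 0 = 0 /\ r (M / 2) = 0 /\ z 0 < z (M / 2) /\
  (forall s, 0 < s < M / 2 -> 0 < r s).

Definition model_sphere (M : R) (r z : R -> R) : Prop :=
  sphere_of_revolution M r z /\
  2 * PI < M /\
  (forall s, 0 <= s <= PI / 2 -> r s = sin s) /\
  (* symmetry of sigma with respect to the x-axis (z |-> -z) *)
  (forall s, r (M / 2 - s) = r s /\ z (M / 2 - s) = - z s) /\
  (forall s, 0 < s < M / 2 ->
     (Derive r s = 0 <-> (s = PI / 2 \/ s = M / 2 - PI / 2 \/ s = M / 4))) /\
  r (PI / 2) = 1 /\ r (M / 2 - PI / 2) = 1 /\
  0 < r (M / 4) < 1 /\
  (forall s, 0 < s < M / 2 -> r (M / 4) <= r s <= 1).

Definition geodesic_solution (r : R -> R) (S Th B : R -> R) : Prop :=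
  forall t,
    is_derive S t (sin (B t)) /\
    is_derive B t (Derive r (S t) / r (S t) * cos (B t)) /\
    is_derive Th t (cos (B t) / r (S t)).

(* T is the first return time to the Birkhoff annulus A of P_{M/4}:
   s = M/4 and beta in (0,pi) mod 2pi, i.e. sin beta > 0. *)
Definition first_return (M : R) (S B : R -> R) (T : R) : Prop :=
  0 < T /\ S T = M / 4 /\ 0 < sin (B T) /\
  (forall t, 0 < t < T -> ~ (S t = M / 4 /\ 0 < sin (B t))).

(* f : (-1,1) -> R is the rotation function of the first return map
   rho(x, eta) = (x + f(eta) mod L, eta) on A, where x = r_min * theta is the
   arclength along P_{M/4}, L = 2 pi r_min, eta = - cos beta; f is the
   continuous lift with f(0) = 0.  For eta <> 0 the geodesic avoids the poles,
   so the return map is computed in the coordinates (s, theta, beta). *)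
Definition rotation_function (M : R) (r f : R -> R) : Prop :=
  (forall x, -1 < x < 1 -> continuous f x) /\
  f 0 = 0 /\
  forall eta, -1 < eta < 1 -> eta <> 0 ->
  forall S Th B : R -> R,
    geodesic_solution r S Th B ->
    S 0 = M / 4 -> 0 < sin (B 0) -> - cos (B 0) = eta ->
    forall T, first_return M S B T ->
    exists k : Z,
      r (M / 4) * (Th T - Th 0) = f eta + IZR k * (2 * PI * r (M / 4)).

(* Main.v *)
Require Import Defs.
From Stdlib Require Import Reals Lra Lia ClassicalEpsilon Nsatz.
From Coquelicot Require Import Coquelicot.
Open Scope R_scope.

Lemma scal_R (x y : R) : scal x y = x * y.
Proof. reflexivity. Qed.

Lemma is_derive_shift (s t : R) : is_derive (fun x : R => x - s) t 1.
Proof. auto_derive; auto; ring. Qed.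

Lemma D_plus_const (W : R -> R) (C t d : R) : is_derive W t d -> is_derive (fun x => W x + C) t d.
Proof.
  intros H; apply is_derive_Reals in H; apply is_derive_Reals.
  replace d with (d + 0) by ring. apply derivable_pt_lim_plus; auto. apply derivable_pt_lim_const.
Qed.

Lemma D_comp_shift (W : R -> R) (s t d : R) : is_derive W (t - s) d -> is_derive (fun x => W (x - s)) t d.
Proof.
  intros H. pose proof (is_derive_comp W (fun x => x - s) t d 1 H (is_derive_shift s t)) as H'.
  rewrite scal_R, Rmult_1_l in H'. exact H'.
Qed.

Lemma glue_derive (f g h : R -> R) (t0 d l : R) :
  0 < d ->
  (forall t, t0 - d < t <= t0 -> f t = g t) ->
  (forall t, t0 <= t < t0 + d -> f t = h t) ->
  is_derive g t0 l -> is_derive h t0 l -> is_derive f t0 l.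
Proof.
  intros Hd Hg Hh Dg Dh.
  apply is_derive_Reals in Dg. apply is_derive_Reals in Dh.
  apply is_derive_Reals.
  intros eps Heps.
  destruct (Dg eps Heps) as [d1 Hd1]. destruct (Dh eps Heps) as [d2 Hd2].
  assert (Hm : 0 < Rmin d (Rmin d1 d2)).
  { destruct d1, d2; simpl. repeat apply Rmin_pos; lra. }
  exists (mkposreal _ Hm). intros e He Hae. simpl in Hae.
  assert (Ha1 : Rabs e < d1) by (eapply Rlt_le_trans; [exact Hae|]; 
     eapply Rle_trans; [apply Rmin_r|apply Rmin_l]).
  assert (Ha2 : Rabs e < d2) by (eapply Rlt_le_trans; [exact Hae|];
     eapply Rle_trans; [apply Rmin_r|apply Rmin_r]).
  assert (Ha : Rabs e < d) by (eapply Rlt_le_trans; [exact Hae|apply Rmin_l]).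
  apply Rabs_def2 in Ha.
  destruct (Rlt_le_dec e 0) as [Hn|Hp].
  - rewrite (Hg (t0 + e)) by lra. rewrite (Hg t0) by lra. apply Hd1; auto.
  - rewrite (Hh (t0 + e)) by lra. rewrite (Hh t0) by lra. apply Hd2; auto.
Qed.

Lemma Int_part_charac (x : R) (k : Z) : IZR k <= x < IZR k + 1 -> Int_part x = k.
Proof.
  intros [H1 H2]. unfold Int_part.
  assert (E : (k + 1)%Z = up x).
  { apply tech_up; rewrite plus_IZR; simpl; lra. }
  rewrite <- E. lia.
Qed.

Definition pw (b1 b2 b3 : R) (f1 f2 f3 f4 : R -> R) (u : R) : R :=
  if Rle_dec u b1 then f1 u else if Rle_dec u b2 then f2 u
  else if Rle_dec u b3 then f3 u else f4 u.

Lemma pw_map1 (b1 b2 b3 : R) (F : R -> R) f1 f2 f3 f4 u :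
  F (pw b1 b2 b3 f1 f2 f3 f4 u) =
  pw b1 b2 b3 (fun v => F (f1 v)) (fun v => F (f2 v)) (fun v => F (f3 v)) (fun v => F (f4 v)) u.
Proof. unfold pw; repeat destruct Rle_dec; auto. Qed.

Lemma pw_map2 (b1 b2 b3 : R) (F : R -> R -> R) f1 f2 f3 f4 g1 g2 g3 g4 u :
  F (pw b1 b2 b3 f1 f2 f3 f4 u) (pw b1 b2 b3 g1 g2 g3 g4 u) =
  pw b1 b2 b3 (fun v => F (f1 v) (g1 v)) (fun v => F (f2 v) (g2 v))
     (fun v => F (f3 v) (g3 v)) (fun v => F (f4 v) (g4 v)) u.
Proof. unfold pw; repeat destruct Rle_dec; auto. Qed.

Section Periodic.
Variables (b0 b1 b2 b3 b4 D : R).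
Hypothesis Hb : b0 < b1 < b2 /\ b2 < b3 < b4.
Variables (X1 X2 X3 X4 D1 D2 D3 D4 : R -> R).
Hypothesis HD1 : forall u, b0 <= u <= b1 -> is_derive X1 u (D1 u).
Hypothesis HD2 : forall u, b1 <= u <= b2 -> is_derive X2 u (D2 u).
Hypothesis HD3 : forall u, b2 <= u <= b3 -> is_derive X3 u (D3 u).
Hypothesis HD4 : forall u, b3 <= u <= b4 -> is_derive X4 u (D4 u).
Hypothesis HX12 : X1 b1 = X2 b1.
Hypothesis HX23 : X2 b2 = X3 b2.
Hypothesis HX34 : X3 b3 = X4 b3.
Hypothesis HX41 : X4 b4 = X1 b0 + D.
Hypothesis HD12 : D1 b1 = D2 b1.
Hypothesis HD23 : D2 b2 = D3 b2.
Hypothesis HD34 : D3 b3 = D4 b3.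
Hypothesis HD41 : D4 b4 = D1 b0.

Definition per_n (t : R) : Z := Int_part ((t - b0) / (b4 - b0)).
Definition per_u (t : R) : R := t - IZR (per_n t) * (b4 - b0).
Definition per_X (t : R) : R :=
  pw b1 b2 b3 X1 X2 X3 X4 (per_u t) + IZR (per_n t) * D.
Definition per_D (t : R) : R := pw b1 b2 b3 D1 D2 D3 D4 (per_u t).

Lemma per_n_charac (t : R) (k : Z) :
  b0 <= t - IZR k * (b4 - b0) < b4 -> per_n t = k.
Proof.
  intros H. unfold per_n. apply Int_part_charac.
  assert (HP : 0 < b4 - b0) by lra.
  split.
  - apply (Rmult_le_reg_r (b4 - b0)); auto.
    unfold Rdiv; rewrite Rmult_assoc, Rinv_l, Rmult_1_r by lra. nra.
  - apply (Rmult_lt_reg_r (b4 - b0)); auto.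
    unfold Rdiv; rewrite Rmult_assoc, Rinv_l, Rmult_1_r by lra. nra.
Qed.

Lemma per_u_range (t : R) : b0 <= per_u t < b4.
Proof.
  assert (HP : 0 < b4 - b0) by lra.
  unfold per_u, per_n. destruct (base_Int_part ((t - b0) / (b4 - b0))) as [H1 H2].
  set (k := Int_part _) in *.
  assert (E : (t - b0) / (b4 - b0) * (b4 - b0) = t - b0)
    by (field; lra).
  split.
  - assert (IZR k * (b4 - b0) <= (t - b0) / (b4 - b0) * (b4 - b0))
      by (apply Rmult_le_compat_r; lra). lra.
  - assert ((t - b0) / (b4 - b0) * (b4 - b0) < (IZR k + 1) * (b4 - b0))
      by (apply Rmult_lt_compat_r; lra). lra.
Qed.

Lemma per_local (t : R) :
  forall a m b Y Z d, b0 <= a < m -> m < b <= b4 -> per_u t = m ->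
  (forall v, a < v <= m -> pw b1 b2 b3 X1 X2 X3 X4 v = Y v) ->
  (forall v, m <= v < b -> pw b1 b2 b3 X1 X2 X3 X4 v = Z v) ->
  is_derive Y m d -> is_derive Z m d -> is_derive per_X t d.
Proof.
  intros a m b Y Z d Ha Hb' Hu HY HZ DY DZ.
  assert (HP : 0 < b4 - b0) by lra.
  set (k := per_n t).
  set (sh := IZR k * (b4 - b0)).
  assert (Hut : m = t - sh) by (rewrite <- Hu; reflexivity).
  assert (Loc : forall t', b0 <= t' - sh < b4 ->
     per_X t' = pw b1 b2 b3 X1 X2 X3 X4 (t' - sh) + IZR k * D).
  { intros t' Ht'. unfold per_X, per_u. rewrite (per_n_charac t' k Ht'). auto. }
  assert (Hsh : forall (W : R -> R), is_derive W (t - sh) d ->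
     is_derive (fun x => W (x - sh) + IZR k * D) t d).
  { intros W HW.
    apply D_plus_const. apply D_comp_shift. exact HW. }
  apply (glue_derive _ (fun x => Y (x - sh) + IZR k * D)
                       (fun x => Z (x - sh) + IZR k * D) t (Rmin (m - a) (b - m)) d).
  - apply Rmin_pos; lra.
  - intros x Hx. assert (Rmin (m - a) (b - m) <= m - a) by apply Rmin_l.
    rewrite Loc by lra. rewrite HY by lra. auto.
  - intros x Hx. assert (Rmin (m - a) (b - m) <= b - m) by apply Rmin_r.
    rewrite Loc by lra. rewrite HZ by lra. auto.
  - apply Hsh. rewrite <- Hut. auto.
  - apply Hsh. rewrite <- Hut. auto.
Qed.

Lemma per_derive (t : R) : is_derive per_X t (per_D t).
Proof.
  assert (HP : 0 < b4 - b0) by lra.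
  destruct (per_u_range t) as [Hu1 Hu2].
  unfold per_D.
  set (u := per_u t) in *.
  assert (Hu : per_u t = u) by reflexivity.
  destruct (Req_dec u b0) as [E0|N0].
  -
    set (k := per_n t).
    set (sh := IZR k * (b4 - b0)).
    assert (Hut : u = t - sh) by reflexivity.
    assert (Loc : forall t', b0 <= t' - sh < b4 ->
       per_X t' = pw b1 b2 b3 X1 X2 X3 X4 (t' - sh) + IZR k * D).
    { intros t' Ht'. unfold per_X, per_u. rewrite (per_n_charac t' k Ht'). auto. }
    assert (LocM : forall t', b0 <= t' - IZR (k - 1) * (b4 - b0) < b4 ->
       per_X t' = pw b1 b2 b3 X1 X2 X3 X4 (t' - IZR (k-1) * (b4 - b0)) + IZR (k-1) * D).
    { intros t' Ht'. unfold per_X, per_u. rewrite (per_n_charac t' (k-1) Ht'). auto. }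
    assert (Dv : pw b1 b2 b3 D1 D2 D3 D4 u = D1 b0).
    { unfold pw. rewrite E0. destruct Rle_dec; lra. }
    rewrite Dv.
    assert (Esh : IZR (k-1) * (b4 - b0) = sh - (b4 - b0)) by (rewrite minus_IZR; unfold sh; simpl; ring).
    apply (glue_derive _ (fun x => X4 (x - IZR (k-1) * (b4 - b0)) + IZR (k-1) * D)
                         (fun x => X1 (x - sh) + IZR k * D) t (Rmin (b4 - b3) (b1 - b0)) (D1 b0)).
    + apply Rmin_pos; lra.
    + intros x Hx. assert (Rmin (b4 - b3) (b1 - b0) <= b4 - b3) by apply Rmin_l.
      destruct (Req_dec x t) as [Ext|Nxt].
      * subst x. rewrite Loc by lra. rewrite Esh.
        replace (t - (sh - (b4 - b0))) with b4 by lra. replace (t - sh) with b0 by lra.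
        unfold pw. destruct (Rle_dec b0 b1); [|lra].
        rewrite HX41, minus_IZR. simpl. ring.
      * rewrite LocM by (rewrite Esh; lra).
        f_equal. rewrite Esh. unfold pw.
        repeat destruct Rle_dec; auto; lra.
    + intros x Hx. assert (Rmin (b4 - b3) (b1 - b0) <= b1 - b0) by apply Rmin_r.
      rewrite Loc by lra.
      assert (Ex : x = t -> X1 (x - sh) + IZR k * D = X1 (x - sh) + IZR k * D) by auto.
      unfold pw. destruct (Rle_dec (x - sh) b1); [auto|lra].
    + rewrite <- HD41.
      apply D_plus_const. apply D_comp_shift.
      replace (t - IZR (k-1) * (b4 - b0)) with b4 by (rewrite Esh; lra).
      apply HD4; lra.
    + apply D_plus_const. apply D_comp_shift.
      replace (t - sh) with b0 by lra. apply HD1; lra.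
  -
    assert (Hb0u : b0 < u) by lra.
    unfold pw.
    destruct (Rle_dec u b1) as [L1|G1].
    { destruct (Req_dec u b1) as [E1|N1].
      - apply (per_local t b0 u b2 X1 X2); try lra; try reflexivity.
        + intros v Hv. unfold pw. destruct Rle_dec; auto; lra.
        + intros v Hv. unfold pw. destruct (Rle_dec v b1).
          * assert (v = b1) by lra. subst v. rewrite E1 in *. auto.
          * destruct Rle_dec; auto; lra.
        + apply HD1; lra.
        + rewrite E1 in *. rewrite HD12. apply HD2; lra.
      - apply (per_local t b0 u b1 X1 X1); try lra; try reflexivity.
        + intros v Hv. unfold pw. destruct Rle_dec; auto; lra.
        + intros v Hv. unfold pw. destruct Rle_dec; auto; lra.
        + apply HD1; lra.
        + apply HD1; lra. }
    destruct (Rle_dec u b2) as [L2|G2].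
    { destruct (Req_dec u b2) as [E2|N2].
      - apply (per_local t b1 u b3 X2 X3); try lra; try reflexivity.
        + intros v Hv. unfold pw. repeat destruct Rle_dec; auto; lra.
        + intros v Hv. unfold pw. destruct (Rle_dec v b1); [lra|]. destruct (Rle_dec v b2).
          * assert (v = b2) by lra. subst v. rewrite E2 in *. auto.
          * destruct Rle_dec; auto; lra.
        + apply HD2; lra.
        + rewrite E2 in *. rewrite HD23. apply HD3; lra.
      - apply (per_local t b1 u b2 X2 X2); try lra; try reflexivity.
        + intros v Hv. unfold pw. repeat destruct Rle_dec; auto; lra.
        + intros v Hv. unfold pw. repeat destruct Rle_dec; auto; lra.
        + apply HD2; lra.
        + apply HD2; lra. }
    destruct (Rle_dec u b3) as [L3|G3].
    { destruct (Req_dec u b3) as [E3|N3].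
      - apply (per_local t b2 u b4 X3 X4); try lra; try reflexivity.
        + intros v Hv. unfold pw. repeat destruct Rle_dec; auto; lra.
        + intros v Hv. unfold pw. destruct (Rle_dec v b1); [lra|]. destruct (Rle_dec v b2); [lra|].
          destruct (Rle_dec v b3).
          * assert (v = b3) by lra. subst v. rewrite E3 in *. auto.
          * auto.
        + apply HD3; lra.
        + rewrite E3 in *. rewrite HD34. apply HD4; lra.
      - apply (per_local t b2 u b3 X3 X3); try lra; try reflexivity.
        + intros v Hv. unfold pw. repeat destruct Rle_dec; auto; lra.
        + intros v Hv. unfold pw. repeat destruct Rle_dec; auto; lra.
        + apply HD3; lra.
        + apply HD3; lra. }
    apply (per_local t b3 u b4 X4 X4); try lra; try reflexivity.
    + intros v Hv. unfold pw. repeat destruct Rle_dec; auto; lra.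
    + intros v Hv. unfold pw. repeat destruct Rle_dec; auto; lra.
    + apply HD4; lra.
    + apply HD4; lra.
Qed.
End Periodic.

Ltac tidy := repeat match goal with |- context [?a * (?a * 1)] => replace (a * (a * 1)) with (a ^ 2) by ring end;
  repeat match goal with |- context [?a + - ?b] => change (a + - b) with (a - b) end.

Ltac alg Hq := field_simplify_eq; [simpl; simpl in Hq; nsatz | repeat split; try lra; try nra].

Ltac nsatz_clean := repeat match goal with H : _ < _ |- _ => clear H | H : _ <= _ |- _ => clear H | H : _ /\ _ |- _ => clear H | H : forall _, _ |- _ => clear H | H : Derive _ _ = _ |- _ => clear H end; nsatz.


Section Neck.
Variables (M : R) (r : R -> R) (c : R).
Hypothesis Hr : forall x, ex_derive r x.
Hypothesis Hsin : forall s, 0 <= s <= PI/2 -> r s = sin s.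
Hypothesis Hsym : forall s, r (M/2 - s) = r s.
Hypothesis HM : 2 * PI < M.
Hypothesis Hmin : forall s, 0 < s < M/2 -> r (M/4) <= r s.
Hypothesis Hrm1 : r (M/4) < 1.
Hypothesis Hc : 0 < c < r (M/4).

Definition a1 := asin c.

Lemma a1_range : 0 < a1 < PI/2 /\ sin a1 = c.
Proof.
  assert (c < 1) by lra.
  unfold a1. pose proof (asin_bound_lt c ltac:(lra)) as [H1 H2].
  rewrite sin_asin by lra.
  split; [|auto]. split; auto.
  destruct (Rle_lt_dec (asin c) 0) as [Hn|Hp]; auto.
  exfalso. assert (sin (asin c) <= sin 0).
  { apply sin_incr_1; lra. }
  rewrite sin_asin, sin_0 in H0 by lra. lra.
Qed.

Definition region (u : R) := a1 < u < M/2 - a1.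

Lemma r_gt_c (u : R) : region u -> c < r u.
Proof.
  unfold region; intros [H1 H2]. destruct a1_range as [[Ha1 Ha2] Hsa].
  pose proof PI_RGT_0.
  destruct (Rle_lt_dec u (PI/2)) as [L|G].
  - rewrite Hsin by lra. rewrite <- Hsa. apply sin_increasing_1; lra.
  - destruct (Rle_lt_dec u (M/2 - PI/2)) as [L2|G2].
    + pose proof (Hmin u ltac:(lra)). lra.
    + replace u with (M/2 - (M/2 - u)) by ring. rewrite Hsym.
      rewrite Hsin by lra. rewrite <- Hsa. apply sin_increasing_1; lra.
Qed.

Lemma region_M4 : region (M/4).
Proof. destruct a1_range as [[Ha1 Ha2] Hsa]. unfold region; lra. Qed.

Definition wI (u : R) := r u / sqrt (r u ^ 2 - c ^ 2).
Definition vI (u : R) := c / (r u * sqrt (r u ^ 2 - c ^ 2)).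
Definition FF (u : R) := sqrt (r u ^ 2 - c ^ 2) / r u.

Lemma sq_pos (u : R) : region u -> 0 < r u ^ 2 - c ^ 2.
Proof. intros H. pose proof (r_gt_c u H). nra. Qed.

Lemma sqrt_pos' (u : R) : region u -> 0 < sqrt (r u ^ 2 - c ^ 2).
Proof. intros H. apply sqrt_lt_R0. apply sq_pos; auto. Qed.

Lemma wI_cont (u : R) : region u -> continuous wI u.
Proof.
  intros H. apply (@ex_derive_continuous R_AbsRing R_NormedModule wI u). unfold wI.
  pose proof (sq_pos u H). pose proof (sqrt_pos' u H).
  auto_derive. tidy. repeat split; auto; lra.
Qed.

Lemma vI_cont (u : R) : region u -> continuous vI u.
Proof.
  intros H. apply (@ex_derive_continuous R_AbsRing R_NormedModule vI u). unfold vI.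
  pose proof (sq_pos u H). pose proof (sqrt_pos' u H). pose proof (r_gt_c u H).
  auto_derive. tidy. repeat split; auto; try lra.
  apply Rgt_not_eq. apply Rmult_lt_0_compat; lra.
Qed.

Lemma region_between (x y z : R) : region x -> region y -> Rmin x y <= z <= Rmax x y -> region z.
Proof.
  unfold region; intros H1 H2 H3. unfold Rmin, Rmax in H3.
  destruct Rle_dec; lra.
Qed.

Lemma RInt_region_derive (h : R -> R) (s : R) :
  (forall u, region u -> continuous h u) -> region s ->
  is_derive (fun x => RInt h (M/4) x) s (h s).
Proof.
  intros Hh Hs. apply (is_derive_RInt h (fun x => RInt h (M/4) x) (M/4)).
  - apply (locally_interval _ s a1 (M/2 - a1)); try (simpl; unfold region in Hs; lra).
    intros y Hy1 Hy2. simpl in Hy1, Hy2. apply (RInt_correct (V:=R_CompleteNormedModule)).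
    apply (ex_RInt_continuous (V:=R_CompleteNormedModule)). intros z Hz. apply Hh.
    apply (region_between (M/4) y); auto. apply region_M4. unfold region; lra.
  - apply Hh; auto.
Qed.

Definition phi (s : R) : R := RInt wI (M/4) s.
Definition GG (s : R) : R := RInt vI (M/4) s.

Lemma phi_derive (s : R) : region s -> is_derive phi s (wI s).
Proof. intros; apply RInt_region_derive; auto. apply wI_cont. Qed.

Lemma GG_derive (s : R) : region s -> is_derive GG s (vI s).
Proof. intros; apply RInt_region_derive; auto. apply vI_cont. Qed.

Lemma wI_pos (u : R) : region u -> 0 < wI u.
Proof.
  intros H. unfold wI. pose proof (sqrt_pos' u H). pose proof (r_gt_c u H).
  apply Rdiv_lt_0_compat; lra.
Qed.

Lemma phi_cont_pt (s : R) : region s -> continuity_pt phi s.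
Proof.
  intros H. apply continuity_pt_filterlim. apply (@ex_derive_continuous R_AbsRing R_NormedModule phi s).
  eexists; apply phi_derive; auto.
Qed.

Lemma phi_incr (x y : R) : region x -> region y -> x < y -> phi x < phi y.
Proof.
  intros Hx Hy Hxy.
  destruct (MVT_gen phi x y wI) as [xi [Hxi E]].
  - intros z Hz. apply phi_derive. apply (region_between x y); auto; lra.
  - intros z Hz. apply phi_cont_pt. apply (region_between x y); auto.
  - assert (region xi) by (apply (region_between x y); auto).
    pose proof (wI_pos xi H). nra.
Qed.

Lemma phi_M4 : phi (M/4) = 0.
Proof. unfold phi. apply (RInt_point (V:=R_CompleteNormedModule)). Qed.


Definition aa0 := (a1 + PI/2)/2.
Definition bb0 := M/2 - aa0.

Lemma aa0_facts : a1 < aa0 < PI/2 /\ M/2 - PI/2 < bb0 < M/2 - a1 /\ aa0 < bb0.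
Proof. destruct a1_range as [[Ha1 Ha2] _]. unfold bb0, aa0. lra. Qed.

Lemma region_ab (u : R) : aa0 <= u <= bb0 -> region u.
Proof. destruct aa0_facts as [H1 [H2 H3]]. unfold region; lra. Qed.

Definition psi (y : R) := epsilon (inhabits 0) (fun s => aa0 <= s <= bb0 /\ phi s = y).

Lemma psi_spec (y : R) : phi aa0 <= y <= phi bb0 -> aa0 <= psi y <= bb0 /\ phi (psi y) = y.
Proof.
  intros Hy. unfold psi. apply epsilon_spec.
  destruct aa0_facts as [H1 [H2 H3]].
  destruct (Req_dec y (phi aa0)) as [E|N1]. { exists aa0. split; auto; lra. }
  destruct (Req_dec y (phi bb0)) as [E|N2]. { exists bb0. split; auto; lra. }
  destruct (Ranalysis5.IVT_interv (fun s => phi s - y) aa0 bb0) as [z [Hz1 Hz2]].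
  - intros a Ha. apply continuity_pt_minus. apply phi_cont_pt. apply region_ab; auto.
    apply continuity_pt_const. intros ? ?; auto.
  - lra.
  - lra.
  - lra.
  - exists z. split; auto. lra.
Qed.

Lemma phi_inj (x y : R) : region x -> region y -> phi x = phi y -> x = y.
Proof.
  intros Hx Hy E. destruct (Rtotal_order x y) as [L|[Q|G]]; auto.
  - pose proof (phi_incr x y Hx Hy L). lra.
  - pose proof (phi_incr y x Hy Hx G). lra.
Qed.

Lemma phi_le (x y : R) : aa0 <= x -> x <= y -> y <= bb0 -> phi x <= phi y.
Proof.
  intros H1 H2 H3. destruct (Req_dec x y) as [E|N]. rewrite E; lra.
  apply Rlt_le, phi_incr; try apply region_ab; lra.
Qed.

Lemma psi_phi (s : R) : aa0 <= s <= bb0 -> psi (phi s) = s.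
Proof.
  intros Hs. destruct (psi_spec (phi s)) as [H1 H2].
  - split; apply phi_le; lra.
  - apply phi_inj; auto; apply region_ab; auto.
Qed.

Lemma psi_incr (x y : R) : phi aa0 <= x -> x < y -> y <= phi bb0 -> psi x < psi y.
Proof.
  intros H1 H2 H3.
  destruct (psi_spec x ltac:(lra)) as [Ha Ea].
  destruct (psi_spec y ltac:(lra)) as [Hb Eb].
  destruct (Rlt_le_dec (psi x) (psi y)) as [L|G]; auto.
  destruct (Req_dec (psi x) (psi y)) as [E|N].
  - rewrite <- Ea, <- Eb, E in H2. lra.
  - assert (psi y < psi x) by lra.
    pose proof (phi_incr (psi y) (psi x) ltac:(apply region_ab; auto) ltac:(apply region_ab; auto) H).
    lra.
Qed.

Lemma psi_derive (y : R) : phi aa0 < y < phi bb0 -> is_derive psi y (/ wI (psi y)).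
Proof.
  intros Hy.
  destruct aa0_facts as [F1 [F2 F3]].
  assert (Prf : forall a, psi (phi aa0) <= a <= psi (phi bb0) -> derivable_pt phi a).
  { intros a Ha. rewrite !psi_phi in Ha by lra. apply ex_derive_Reals_0.
    eexists. apply phi_derive. apply region_ab; auto. }
  assert (Cont : continuity_pt psi y).
  { apply (Ranalysis5.continuity_pt_recip_interv phi psi aa0 bb0); auto.
    - intros x z Hx Hxz Hz. apply phi_incr; try apply region_ab; lra.
    - intros x Hx1 Hx2. unfold comp, id. apply psi_spec; lra.
    - intros x Hx1 Hx2. apply psi_spec; lra.
    - intros a Ha. apply phi_cont_pt. apply region_ab; auto. }
  assert (Hincr : psi (phi aa0) <= psi y <= psi (phi bb0)).
  { rewrite !psi_phi by lra. apply psi_spec; lra. }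
  assert (Hab : phi aa0 < phi bb0) by lra.
  pose proof (Ranalysis5.derivable_pt_lim_recip_interv phi psi (phi aa0) (phi bb0) y Prf Cont Hab Hy Hincr) as D.
  destruct (psi_spec y ltac:(lra)) as [Hp Ep].
  assert (Dv : derive_pt phi (psi y) (Prf (psi y) Hincr) = wI (psi y)).
  { apply derive_pt_eq_0. apply is_derive_Reals. apply phi_derive. apply region_ab; auto. }
  rewrite Dv in D.
  assert (wI (psi y) <> 0) by (apply Rgt_not_eq, wI_pos, region_ab; auto).
  apply is_derive_Reals. replace (/ wI (psi y)) with (1 / wI (psi y)) by (field; auto).
  apply D.
  - intros x Hx. unfold comp, id. apply psi_spec; lra.
  - auto.
Qed.

Definition Bn (s : R) := atan (sqrt (r s ^ 2 - c ^ 2) / c).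

Lemma Bn_derive (u : R) : region u ->
  is_derive Bn u (c * Derive r u / (r u * sqrt (r u ^ 2 - c ^ 2))).
Proof.
  intros Hu. pose proof (r_gt_c u Hu) as H1.
  pose proof (sq_pos u Hu) as H2. pose proof (sqrt_pos' u Hu) as H3.
  unfold Bn. auto_derive. tidy; repeat split; auto. tidy.
  change (fun x => r x) with r.
  set (q := sqrt (r u ^ 2 - c ^ 2)) in *.
  assert (Hq : q ^ 2 = r u ^ 2 - c ^ 2) by (unfold q; rewrite pow2_sqrt; lra).
  alg Hq.
Qed.

Lemma sqrt_1_x2 (s : R) : region s -> sqrt (1 + (sqrt (r s ^ 2 - c ^ 2) / c)²) = r s / c.
Proof.
  intros Hu. pose proof (r_gt_c s Hu) as H1.
  pose proof (sq_pos s Hu) as H2. pose proof (sqrt_pos' s Hu) as H3.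
  rewrite <- (sqrt_Rsqr (r s / c)) by (apply Rlt_le, Rdiv_lt_0_compat; lra).
  f_equal. unfold Rsqr.
  set (q := sqrt (r s ^ 2 - c ^ 2)) in *.
  assert (Hq : q ^ 2 = r s ^ 2 - c ^ 2) by (unfold q; rewrite pow2_sqrt; lra).
  alg Hq.
Qed.

Lemma sin_Bn (s : R) : region s -> sin (Bn s) = FF s.
Proof.
  intros Hu. pose proof (r_gt_c s Hu) as H1.
  unfold Bn, FF. rewrite sin_atan, sqrt_1_x2 by auto. field. lra.
Qed.

Lemma cos_Bn (s : R) : region s -> cos (Bn s) = c / r s.
Proof.
  intros Hu. pose proof (r_gt_c s Hu) as H1.
  unfold Bn. rewrite cos_atan, sqrt_1_x2 by auto. field. lra.
Qed.

Lemma FF_wI (s : R) : region s -> / wI s = FF s.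
Proof.
  intros Hu. pose proof (r_gt_c s Hu) as H1. pose proof (sqrt_pos' s Hu) as H3.
  unfold wI, FF. field. lra.
Qed.

Lemma FF_pos (s : R) : region s -> 0 < FF s.
Proof.
  intros Hu. pose proof (r_gt_c s Hu) as H1. pose proof (sqrt_pos' s Hu) as H3.
  unfold FF. apply Rdiv_lt_0_compat; lra.
Qed.

Definition inrng (y : R) := phi aa0 < y < phi bb0.

Lemma inrng_region (y : R) : inrng y -> region (psi y).
Proof. intros H. apply region_ab. apply psi_spec. unfold inrng in H. lra. Qed.

Lemma neck_S (y : R) : inrng y -> is_derive psi y (sin (Bn (psi y))).
Proof.
  intros H. pose proof (inrng_region y H) as R1.
  rewrite sin_Bn, <- FF_wI by auto. apply psi_derive; auto.
Qed.

Lemma neck_B (y : R) : inrng y ->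
  is_derive (fun y => Bn (psi y)) y (Derive r (psi y) / r (psi y) * cos (Bn (psi y))).
Proof.
  intros H. pose proof (inrng_region y H) as R1.
  pose proof (is_derive_comp Bn psi y _ _ (Bn_derive _ R1) (psi_derive y H)) as D.
  rewrite scal_R in D. eapply is_derive_ext; [intros; reflexivity|].
  replace (Derive r (psi y) / r (psi y) * cos (Bn (psi y))) with
    (/ wI (psi y) * (c * Derive r (psi y) / (r (psi y) * sqrt (r (psi y) ^ 2 - c ^ 2)))); auto.
  rewrite cos_Bn by auto. unfold wI.
  pose proof (r_gt_c _ R1). pose proof (sqrt_pos' _ R1). field. lra.
Qed.

Lemma neck_Th (y : R) : inrng y ->
  is_derive (fun y => GG (psi y)) y (cos (Bn (psi y)) / r (psi y)).
Proof.
  intros H. pose proof (inrng_region y H) as R1.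
  pose proof (is_derive_comp GG psi y _ _ (GG_derive _ R1) (psi_derive y H)) as D.
  rewrite scal_R in D.
  replace (cos (Bn (psi y)) / r (psi y)) with (/ wI (psi y) * vI (psi y)); auto.
  rewrite cos_Bn by auto. unfold wI, vI.
  pose proof (r_gt_c _ R1). pose proof (sqrt_pos' _ R1). field. lra.
Qed.

Lemma is_derive_flip (K u : R) : is_derive (fun x : R => K - x) u (-1).
Proof. auto_derive; auto; ring. Qed.

Lemma neck_S_down (K u : R) : inrng (K - u) ->
  is_derive (fun u => psi (K - u)) u (sin (- Bn (psi (K - u)))).
Proof.
  intros H. pose proof (is_derive_comp psi (fun x => K - x) u _ _ (neck_S _ H) (is_derive_flip K u)) as D.
  rewrite scal_R in D. rewrite sin_neg. replace (- sin (Bn (psi (K - u)))) with (-1 * sin (Bn (psi (K - u)))) by ring.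
  exact D.
Qed.

Lemma neck_B_down (K u : R) : inrng (K - u) ->
  is_derive (fun u => - Bn (psi (K - u))) u
    (Derive r (psi (K - u)) / r (psi (K - u)) * cos (- Bn (psi (K - u)))).
Proof.
  intros H. pose proof (is_derive_comp (fun y => Bn (psi y)) (fun x => K - x) u _ _ (neck_B _ H) (is_derive_flip K u)) as D.
  rewrite scal_R in D. rewrite cos_neg.
  apply is_derive_Reals in D. apply is_derive_Reals.
  replace (Derive r (psi (K - u)) / r (psi (K - u)) * cos (Bn (psi (K - u)))) with
    (- (-1 * (Derive r (psi (K - u)) / r (psi (K - u)) * cos (Bn (psi (K - u)))))) by ring.
  apply derivable_pt_lim_opp. exact D.
Qed.

Lemma neck_Th_down (C K u : R) : inrng (K - u) ->
  is_derive (fun u => C - GG (psi (K - u))) u (cos (- Bn (psi (K - u))) / r (psi (K - u))).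
Proof.
  intros H. pose proof (is_derive_comp (fun y => GG (psi y)) (fun x => K - x) u _ _ (neck_Th _ H) (is_derive_flip K u)) as D.
  rewrite scal_R in D. rewrite cos_neg.
  apply is_derive_Reals in D. apply is_derive_Reals.
  replace (cos (Bn (psi (K - u))) / r (psi (K - u))) with
    (0 - (-1 * (cos (Bn (psi (K - u))) / r (psi (K - u))))) by ring.
  apply derivable_pt_lim_minus. apply derivable_pt_lim_const. exact D.
Qed.


Hypothesis HDr : Derive r (PI/2) = 0.
Let Hc1 : 0 < c < 1.
Proof. lra. Qed.

Lemma Dr_cos (s : R) : 0 < s <= PI/2 -> Derive r s = cos s.
Proof.
  intros Hs. destruct (Req_dec s (PI/2)) as [E|N].
  - rewrite E, HDr, cos_PI2. auto.
  - rewrite (Derive_ext_loc r sin).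
    + apply is_derive_unique. apply is_derive_Reals. apply derivable_pt_lim_sin.
    + apply (locally_interval _ s 0 (PI/2)); simpl; try lra.
      intros y H1 H2. apply Hsin; lra.
Qed.

Lemma Dr_sym (s : R) : Derive r (M/2 - s) = - Derive r s.
Proof.
  assert (E : Derive (fun x => r (M/2 - x)) s = Derive r s).
  { apply Derive_ext. intros; apply Hsym. }
  assert (D : is_derive (fun x => r (M/2 - x)) s (Derive r (M/2 - s) * (-1))).
  { pose proof (is_derive_comp r (fun x => M/2 - x) s _ _ (Derive_correct r (M/2 - s) (Hr _)) (is_derive_flip (M/2) s)) as D.
    rewrite scal_R in D. rewrite Rmult_comm. exact D. }
  apply is_derive_unique in D. assert (E2 : Derive r s = Derive r (M/2 - s) * -1) by (rewrite <- E; exact D). lra.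
Qed.

Definition kk := sqrt (1 - c ^ 2).
Definition XX (t : R) := kk * cos t.
Definition YY (t : R) := sqrt (1 - XX t ^ 2).
Definition Sc (t : R) := PI/2 - atan (XX t / YY t).
Definition Bc (t : R) := atan (kk * sin t / c).
Definition Tc (t : R) := t + atan ((1 - c) * sin t * cos t / (c * cos t ^ 2 + sin t ^ 2)).

Lemma kk_facts : 0 < kk < 1 /\ kk ^ 2 = 1 - c ^ 2.
Proof.
  unfold kk. assert (0 < 1 - c ^ 2) by nra.
  split; [split|].
  - apply sqrt_lt_R0; auto.
  - apply Rlt_le_trans with (sqrt 1); [apply sqrt_lt_1; nra | rewrite sqrt_1; lra].
  - rewrite pow2_sqrt; lra.
Qed.

Lemma XX_bound (t : R) : XX t ^ 2 <= kk ^ 2.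
Proof.
  unfold XX. pose proof (COS_bound t). destruct kk_facts as [[H1 H2] H3].
  assert (cos t ^ 2 <= 1) by nra. nra.
Qed.

Lemma YY_facts (t : R) : 0 < YY t /\ YY t ^ 2 = 1 - XX t ^ 2.
Proof.
  pose proof (XX_bound t). destruct kk_facts as [[H1 H2] H3].
  assert (0 < 1 - XX t ^ 2) by nra.
  unfold YY. split. apply sqrt_lt_R0; auto. rewrite pow2_sqrt; lra.
Qed.


Lemma sqrt_eq (A B : R) : 0 <= B -> A = B ^ 2 -> sqrt A = B.
Proof. intros H E. rewrite E, <- Rsqr_pow2. apply sqrt_Rsqr; auto. Qed.

Lemma cap_rel (t : R) : sin t ^ 2 + cos t ^ 2 = 1.
Proof. rewrite <- !Rsqr_pow2. apply sin2_cos2. Qed.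

Lemma sin_Sc (t : R) : sin (Sc t) = YY t.
Proof.
  unfold Sc. rewrite sin_minus, sin_PI2, cos_PI2, cos_atan. 
  destruct (YY_facts t) as [H1 H2].
  rewrite (sqrt_eq _ (/ YY t)).
  - field. lra.
  - apply Rlt_le, Rinv_0_lt_compat; auto.
  - unfold Rsqr. set (y := YY t) in *. set (x := XX t) in *. alg H2.
Qed.

Lemma cos_Sc (t : R) : cos (Sc t) = XX t.
Proof.
  unfold Sc. rewrite cos_minus, sin_PI2, cos_PI2, sin_atan. 
  destruct (YY_facts t) as [H1 H2].
  rewrite (sqrt_eq _ (/ YY t)).
  - field. lra.
  - apply Rlt_le, Rinv_0_lt_compat; auto.
  - unfold Rsqr. set (y := YY t) in *. set (x := XX t) in *. alg H2.
Qed.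

Lemma sqrt_Bc (t : R) : sqrt (1 + (kk * sin t / c)²) = YY t / c.
Proof.
  destruct (YY_facts t) as [H1 H2]. destruct kk_facts as [_ Hk].
  apply sqrt_eq. apply Rlt_le, Rdiv_lt_0_compat; lra.
  unfold Rsqr. pose proof (cap_rel t) as Hs.
  unfold XX in H2. set (y := YY t) in *. set (k := kk) in *.
  field_simplify_eq; [|lra]. simpl in *. nsatz.
Qed.

Lemma sin_Bc (t : R) : sin (Bc t) = kk * sin t / YY t.
Proof.
  destruct (YY_facts t) as [H1 H2].
  unfold Bc. rewrite sin_atan, sqrt_Bc. field. lra.
Qed.

Lemma cos_Bc (t : R) : cos (Bc t) = c / YY t.
Proof.
  destruct (YY_facts t) as [H1 H2].
  unfold Bc. rewrite cos_atan, sqrt_Bc. field. lra.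
Qed.

Lemma Sc_derive (t : R) : is_derive Sc t (sin (Bc t)).
Proof.
  rewrite sin_Bc. destruct (YY_facts t) as [H1 H2]. pose proof (XX_bound t).
  destruct kk_facts as [[Hk1 Hk2] Hk]. pose proof (cap_rel t) as Hs.
  assert (H0 : 0 < 1 - XX t ^ 2) by nra.
  unfold Sc, YY, XX in *. auto_derive.
  - tidy. repeat split; auto; try lra.
  - tidy. set (y := sqrt (1 - (kk * cos t) ^ 2)) in *. set (k := kk) in *.
    field_simplify_eq. simpl in *. nsatz. split; nra.
Qed.

Lemma Bc_derive (t : R) : is_derive Bc t (XX t / YY t * cos (Bc t)).
Proof.
  rewrite cos_Bc. destruct (YY_facts t) as [H1 H2]. pose proof (XX_bound t).
  destruct kk_facts as [[Hk1 Hk2] Hk]. pose proof (cap_rel t) as Hs.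
  unfold Bc, YY, XX in *. auto_derive; auto.
  tidy. set (y := sqrt (1 - (kk * cos t) ^ 2)) in *. set (k := kk) in *.
  field_simplify_eq. set (s := sin t) in *. set (co := cos t) in *. simpl in *. clearbody y s co k. nsatz_clean. repeat split; try nra.
Qed.

Lemma Tc_derive (t : R) : is_derive Tc t (cos (Bc t) / YY t).
Proof.
  rewrite cos_Bc. destruct (YY_facts t) as [H1 H2]. pose proof (XX_bound t).
  destruct kk_facts as [[Hk1 Hk2] Hk]. pose proof (cap_rel t) as Hs.
  assert (Hd : 0 < c * cos t ^ 2 + sin t ^ 2).
  { destruct (Req_dec (sin t) 0) as [E|N].
    - rewrite E in *. nra.
    - assert (0 < sin t ^ 2) by (apply pow2_gt_0; auto). nra. }
  unfold Tc, YY, XX in *. auto_derive.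
  - tidy. repeat split; lra.
  - tidy. set (y := sqrt (1 - (kk * cos t) ^ 2)) in *. set (k := kk) in *.
    field_simplify_eq. set (s := sin t) in *. set (co := cos t) in *. simpl in *. clearbody y s co k. nsatz_clean.
    repeat split; try lra. apply Rgt_not_eq.
    apply Rplus_lt_le_0_compat. apply pow_lt; auto. apply pow2_ge_0.
Qed.


Lemma Sc_range (t : R) : 0 <= cos t -> 0 < Sc t <= PI/2.
Proof.
  intros Hc0. unfold Sc. destruct (YY_facts t) as [H1 H2].
  destruct kk_facts as [[Hk1 Hk2] Hk].
  pose proof (atan_bound (XX t / YY t)) as [A1 A2].
  assert (0 <= atan (XX t / YY t)).
  { assert (0 <= XX t / YY t) by (unfold XX; apply Rle_mult_inv_pos; nra).
    destruct (Req_dec (XX t / YY t) 0) as [E|N].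
    - rewrite E, atan_0. lra.
    - rewrite <- atan_0. apply Rlt_le, atan_increasing. lra. }
  lra.
Qed.

Lemma r_Sc (t : R) : 0 <= cos t -> r (Sc t) = YY t.
Proof. intros H. rewrite Hsin. apply sin_Sc. pose proof (Sc_range t H). lra. Qed.

Lemma Dr_Sc (t : R) : 0 <= cos t -> Derive r (Sc t) = XX t.
Proof. intros H. rewrite Dr_cos. apply cos_Sc. apply Sc_range; auto. Qed.

Lemma capL_B (t : R) : 0 <= cos t -> is_derive Bc t (Derive r (Sc t) / r (Sc t) * cos (Bc t)).
Proof. intros H. rewrite r_Sc, Dr_Sc by auto. apply Bc_derive. Qed.

Lemma capL_T (C t : R) : 0 <= cos t -> is_derive (fun t => C + Tc t) t (cos (Bc t) / r (Sc t)).
Proof.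
  intros H. rewrite r_Sc by auto.
  apply is_derive_Reals. replace (cos (Bc t) / YY t) with (0 + cos (Bc t) / YY t) by ring.
  apply derivable_pt_lim_plus. apply derivable_pt_lim_const. apply is_derive_Reals, Tc_derive.
Qed.

Lemma capU_S (t : R) : is_derive (fun t => M/2 - Sc t) t (sin (- Bc t)).
Proof.
  apply is_derive_Reals. rewrite sin_neg. replace (- sin (Bc t)) with (0 - sin (Bc t)) by ring.
  apply derivable_pt_lim_minus. apply derivable_pt_lim_const. apply is_derive_Reals, Sc_derive.
Qed.

Lemma capU_B (t : R) : 0 <= cos t ->
  is_derive (fun t => - Bc t) t (Derive r (M/2 - Sc t) / r (M/2 - Sc t) * cos (- Bc t)).
Proof.
  intros H. rewrite Dr_sym, Hsym, cos_neg, r_Sc, Dr_Sc by auto.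
  apply is_derive_Reals. replace (- XX t / YY t * cos (Bc t)) with (- (XX t / YY t * cos (Bc t))) by (unfold Rdiv; ring).
  apply derivable_pt_lim_opp. apply is_derive_Reals, Bc_derive.
Qed.

Lemma capU_T (C t : R) : 0 <= cos t ->
  is_derive (fun t => C + Tc t) t (cos (- Bc t) / r (M/2 - Sc t)).
Proof. intros H. rewrite cos_neg, Hsym. apply capL_T; auto. Qed.

Lemma cos_nonneg_cap (t : R) : - (PI/2) <= t <= PI/2 -> 0 <= cos t.
Proof. intros H. apply cos_ge_0; lra. Qed.

Lemma Sc_end (t : R) : cos t = 0 -> Sc t = PI/2.
Proof.
  intros H. unfold Sc, XX. rewrite H, Rmult_0_r. unfold Rdiv. rewrite Rmult_0_l, atan_0. ring.
Qed.

Lemma Tc_end1 : Tc (PI/2) = PI/2.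
Proof. unfold Tc. rewrite cos_PI2. replace ((1 - c) * sin (PI / 2) * 0 / (c * 0 ^ 2 + sin (PI / 2) ^ 2)) with 0.
  rewrite atan_0; ring. unfold Rdiv; ring. Qed.

Lemma Tc_end0 : Tc (- (PI/2)) = - (PI/2).
Proof. unfold Tc. rewrite cos_neg, cos_PI2. replace ((1 - c) * sin (- (PI / 2)) * 0 / (c * 0 ^ 2 + sin (- (PI / 2)) ^ 2)) with 0.
  rewrite atan_0; ring. unfold Rdiv; ring. Qed.

Lemma Bc_end1 : Bc (PI/2) = atan (kk / c).
Proof. unfold Bc. rewrite sin_PI2, Rmult_1_r. auto. Qed.

Lemma Bc_end0 : Bc (- (PI/2)) = - atan (kk / c).
Proof. unfold Bc. rewrite sin_neg, sin_PI2, <- atan_opp. f_equal. unfold Rdiv. ring. Qed.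



Definition q0 := phi (PI/2).
Definition q1 := phi (M/2 - PI/2).
Definition q2 := q1 + PI.
Definition q3 := q2 + (q1 - q0).
Definition q4 := q3 + PI.
Definition KK := q2 + q1.
Definition C2 := GG (M/2 - PI/2) + PI/2.
Definition C3 := 2 * GG (M/2 - PI/2) + PI.
Definition C4 := C3 - GG (PI/2) + PI/2.
Definition Delta := 2 * GG (M/2 - PI/2) - 2 * GG (PI/2) + 2 * PI.

Definition S1 (u : R) := psi u.
Definition B1 (u : R) := Bn (psi u).
Definition T1 (u : R) := GG (psi u).
Definition S2 (u : R) := M/2 - Sc (u - (q1 + PI/2)).
Definition B2 (u : R) := - Bc (u - (q1 + PI/2)).
Definition T2 (u : R) := C2 + Tc (u - (q1 + PI/2)).
Definition S3 (u : R) := psi (KK - u).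
Definition B3 (u : R) := - Bn (psi (KK - u)).
Definition T3 (u : R) := C3 - GG (psi (KK - u)).
Definition S4 (u : R) := Sc (u - (q3 + PI/2)).
Definition B4 (u : R) := Bc (u - (q3 + PI/2)).
Definition T4 (u : R) := C4 + Tc (u - (q3 + PI/2)).

Lemma key_points : aa0 < PI/2 < M/4 /\ M/4 < M/2 - PI/2 < bb0.
Proof. destruct aa0_facts as [H1 [H2 H3]]. pose proof PI_RGT_0. lra. Qed.

Lemma q_facts : phi aa0 < q0 < 0 /\ 0 < q1 < phi bb0.
Proof.
  destruct key_points as [[H1 H2] [H3 H4]]. destruct aa0_facts as [F1 [F2 F3]].
  assert (R1 : region aa0) by (apply region_ab; lra).
  assert (R2 : region (PI/2)) by (apply region_ab; lra).
  assert (R3 : region (M/4)) by (apply region_ab; lra).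
  assert (R4 : region (M/2 - PI/2)) by (apply region_ab; lra).
  assert (R5 : region bb0) by (apply region_ab; lra).
  rewrite <- phi_M4. unfold q0, q1.
  repeat split; apply phi_incr; auto.
Qed.

Lemma q_order : q0 < q1 < q2 /\ q2 < q3 < q4.
Proof. destruct q_facts as [[? ?] [? ?]]. pose proof PI_RGT_0. unfold q4, q3, q2. lra. Qed.

Lemma psi_q0 : psi q0 = PI/2.
Proof. unfold q0. apply psi_phi. destruct key_points. lra. Qed.
Lemma psi_q1 : psi q1 = M/2 - PI/2.
Proof. unfold q1. apply psi_phi. destruct key_points. lra. Qed.
Lemma psi_0 : psi 0 = M/4.
Proof. rewrite <- phi_M4. apply psi_phi. destruct key_points. lra. Qed.

Lemma r_PI2 : r (PI/2) = 1.
Proof. rewrite Hsin, sin_PI2; auto. pose proof PI_RGT_0. lra. Qed.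
Lemma r_MPI2 : r (M/2 - PI/2) = 1.
Proof. rewrite Hsym. apply r_PI2. Qed.

Lemma Bn_1 (s : R) : r s = 1 -> Bn s = atan (kk / c).
Proof. intros H. unfold Bn, kk. rewrite H. f_equal. f_equal. f_equal. ring. Qed.

Lemma KK_q2 : KK - q2 = q1.
Proof. unfold KK. ring. Qed.
Lemma KK_q3 : KK - q3 = q0.
Proof. unfold KK, q3. ring. Qed.

Lemma cos_PI2_neg : cos (- (PI/2)) = 0.
Proof. rewrite cos_neg. apply cos_PI2. Qed.

Lemma junctions :
  (S1 q1 = S2 q1 /\ B1 q1 = B2 q1 /\ T1 q1 = T2 q1) /\
  (S2 q2 = S3 q2 /\ B2 q2 = B3 q2 /\ T2 q2 = T3 q2) /\
  (S3 q3 = S4 q3 /\ B3 q3 = B4 q3 /\ T3 q3 = T4 q3) /\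
  (S4 q4 = S1 q0 + 0 /\ B4 q4 = B1 q0 + 0 /\ T4 q4 = T1 q0 + Delta).
Proof.
  assert (E1 : q1 - (q1 + PI/2) = - (PI/2)) by ring.
  assert (E2 : q2 - (q1 + PI/2) = PI/2) by (unfold q2; field).
  assert (E3 : q3 - (q3 + PI/2) = - (PI/2)) by ring.
  assert (E4 : q4 - (q3 + PI/2) = PI/2) by (unfold q4; field).
  unfold S1, B1, T1, S2, B2, T2, S3, B3, T3, S4, B4, T4.
  rewrite E1, E2, E3, E4, KK_q2, KK_q3, psi_q0, psi_q1.
  rewrite !Sc_end by (apply cos_PI2 || apply cos_PI2_neg).
  rewrite Tc_end0, Tc_end1, Bc_end0, Bc_end1.
  rewrite !Bn_1 by (apply r_PI2 || apply r_MPI2).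
  unfold C4, C3, C2, Delta.
  repeat split; field.
Qed.

Lemma inrng_q (u : R) : q0 <= u <= q1 -> inrng u.
Proof. intros H. destruct q_facts as [[? ?] [? ?]]. unfold inrng. lra. Qed.

Lemma cap_tau (a u : R) : a <= u <= a + PI -> 0 <= cos (u - (a + PI/2)).
Proof. intros H. apply cos_nonneg_cap. lra. Qed.

Lemma piece1 (u : R) : q0 <= u <= q1 ->
  is_derive S1 u (sin (B1 u)) /\ is_derive B1 u (Derive r (S1 u) / r (S1 u) * cos (B1 u)) /\
  is_derive T1 u (cos (B1 u) / r (S1 u)).
Proof.
  intros H. pose proof (inrng_q u H) as I.
  unfold S1, B1, T1. split; [|split].
  - apply neck_S; auto.
  - apply neck_B; auto.
  - apply neck_Th; auto.
Qed.

Lemma piece2 (u : R) : q1 <= u <= q2 ->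
  is_derive S2 u (sin (B2 u)) /\ is_derive B2 u (Derive r (S2 u) / r (S2 u) * cos (B2 u)) /\
  is_derive T2 u (cos (B2 u) / r (S2 u)).
Proof.
  intros H. assert (Hc0 : 0 <= cos (u - (q1 + PI/2))) by (apply cap_tau; unfold q2 in H; lra).
  unfold S2, B2, T2. split; [|split].
  - apply (D_comp_shift (fun t => M/2 - Sc t) (q1 + PI/2) u). apply capU_S.
  - apply (D_comp_shift (fun t => - Bc t) (q1 + PI/2) u). apply capU_B; auto.
  - apply (D_comp_shift (fun t => C2 + Tc t) (q1 + PI/2) u). apply capU_T; auto.
Qed.

Lemma piece3 (u : R) : q2 <= u <= q3 ->
  is_derive S3 u (sin (B3 u)) /\ is_derive B3 u (Derive r (S3 u) / r (S3 u) * cos (B3 u)) /\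
  is_derive T3 u (cos (B3 u) / r (S3 u)).
Proof.
  intros H. assert (I : inrng (KK - u)).
  { apply inrng_q. pose proof KK_q2. pose proof KK_q3. lra. }
  unfold S3, B3, T3. split; [|split].
  - apply neck_S_down; auto.
  - apply neck_B_down; auto.
  - apply neck_Th_down; auto.
Qed.

Lemma piece4 (u : R) : q3 <= u <= q4 ->
  is_derive S4 u (sin (B4 u)) /\ is_derive B4 u (Derive r (S4 u) / r (S4 u) * cos (B4 u)) /\
  is_derive T4 u (cos (B4 u) / r (S4 u)).
Proof.
  intros H. assert (Hc0 : 0 <= cos (u - (q3 + PI/2))) by (apply cap_tau; unfold q4 in H; lra).
  unfold S4, B4, T4. split; [|split].
  - apply (D_comp_shift Sc (q3 + PI/2) u). apply Sc_derive.
  - apply (D_comp_shift Bc (q3 + PI/2) u). apply capL_B; auto.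
  - apply (D_comp_shift (fun t => C4 + Tc t) (q3 + PI/2) u). apply capL_T; auto.
Qed.

Definition Sg := per_X q0 q1 q2 q3 q4 0 S1 S2 S3 S4.
Definition Bg := per_X q0 q1 q2 q3 q4 0 B1 B2 B3 B4.
Definition Tg := per_X q0 q1 q2 q3 q4 Delta T1 T2 T3 T4.

Lemma Sg_val (t : R) : Sg t = pw q1 q2 q3 S1 S2 S3 S4 (per_u q0 q4 t).
Proof. unfold Sg, per_X. ring. Qed.
Lemma Bg_val (t : R) : Bg t = pw q1 q2 q3 B1 B2 B3 B4 (per_u q0 q4 t).
Proof. unfold Bg, per_X. ring. Qed.

Lemma geo_S (t : R) : is_derive Sg t (sin (Bg t)).
Proof.
  destruct junctions as [[J1 [J2 J3]] [[K1 [K2 K3]] [[L1 [L2 L3]] [N1 [N2 N3]]]]].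
  pose proof (per_derive q0 q1 q2 q3 q4 0 q_order S1 S2 S3 S4
    (fun u => sin (B1 u)) (fun u => sin (B2 u)) (fun u => sin (B3 u)) (fun u => sin (B4 u))
    (fun u H => proj1 (piece1 u H)) (fun u H => proj1 (piece2 u H))
    (fun u H => proj1 (piece3 u H)) (fun u H => proj1 (piece4 u H))
    J1 K1 L1 N1) as D.
  rewrite Bg_val. unfold Sg.
  replace (sin (pw q1 q2 q3 B1 B2 B3 B4 (per_u q0 q4 t)))
    with (per_D q0 q1 q2 q3 q4 (fun u => sin (B1 u)) (fun u => sin (B2 u)) (fun u => sin (B3 u)) (fun u => sin (B4 u)) t).
  apply D; simpl; try congruence. rewrite N2. f_equal. ring.
  unfold per_D, pw. repeat destruct Rle_dec; reflexivity.
Qed.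

Lemma geo_B (t : R) : is_derive Bg t (Derive r (Sg t) / r (Sg t) * cos (Bg t)).
Proof.
  destruct junctions as [[J1 [J2 J3]] [[K1 [K2 K3]] [[L1 [L2 L3]] [N1 [N2 N3]]]]].
  pose proof (per_derive q0 q1 q2 q3 q4 0 q_order B1 B2 B3 B4
    (fun u => Derive r (S1 u) / r (S1 u) * cos (B1 u)) (fun u => Derive r (S2 u) / r (S2 u) * cos (B2 u))
    (fun u => Derive r (S3 u) / r (S3 u) * cos (B3 u)) (fun u => Derive r (S4 u) / r (S4 u) * cos (B4 u))
    (fun u H => proj1 (proj2 (piece1 u H))) (fun u H => proj1 (proj2 (piece2 u H)))
    (fun u H => proj1 (proj2 (piece3 u H))) (fun u H => proj1 (proj2 (piece4 u H)))
    J2 K2 L2 N2) as D.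
  rewrite Bg_val, Sg_val. unfold Bg.
  match goal with |- is_derive _ _ ?X => replace X with
    (per_D q0 q1 q2 q3 q4 (fun u => Derive r (S1 u) / r (S1 u) * cos (B1 u)) (fun u => Derive r (S2 u) / r (S2 u) * cos (B2 u))
    (fun u => Derive r (S3 u) / r (S3 u) * cos (B3 u)) (fun u => Derive r (S4 u) / r (S4 u) * cos (B4 u)) t) end.
  apply D; simpl; try congruence. rewrite N1, N2. rewrite !Rplus_0_r. auto.
  unfold per_D, pw. repeat destruct Rle_dec; reflexivity.
Qed.

Lemma geo_T (t : R) : is_derive Tg t (cos (Bg t) / r (Sg t)).
Proof.
  destruct junctions as [[J1 [J2 J3]] [[K1 [K2 K3]] [[L1 [L2 L3]] [N1 [N2 N3]]]]].
  pose proof (per_derive q0 q1 q2 q3 q4 Delta q_order T1 T2 T3 T4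
    (fun u => cos (B1 u) / r (S1 u)) (fun u => cos (B2 u) / r (S2 u))
    (fun u => cos (B3 u) / r (S3 u)) (fun u => cos (B4 u) / r (S4 u))
    (fun u H => proj2 (proj2 (piece1 u H))) (fun u H => proj2 (proj2 (piece2 u H)))
    (fun u H => proj2 (proj2 (piece3 u H))) (fun u H => proj2 (proj2 (piece4 u H)))
    J3 K3 L3 N3) as D.
  rewrite Bg_val, Sg_val. unfold Tg.
  match goal with |- is_derive _ _ ?X => replace X with
    (per_D q0 q1 q2 q3 q4 (fun u => cos (B1 u) / r (S1 u)) (fun u => cos (B2 u) / r (S2 u))
    (fun u => cos (B3 u) / r (S3 u)) (fun u => cos (B4 u) / r (S4 u)) t) end.
  apply D; simpl; try congruence. rewrite N1, N2. rewrite !Rplus_0_r. auto.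
  unfold per_D, pw. repeat destruct Rle_dec; reflexivity.
Qed.

Lemma eval_at (t : R) (k : Z) : q0 <= t - IZR k * (q4 - q0) < q4 ->
  Sg t = pw q1 q2 q3 S1 S2 S3 S4 (t - IZR k * (q4 - q0)) /\
  Bg t = pw q1 q2 q3 B1 B2 B3 B4 (t - IZR k * (q4 - q0)) /\
  Tg t = pw q1 q2 q3 T1 T2 T3 T4 (t - IZR k * (q4 - q0)) + IZR k * Delta.
Proof.
  intros H. pose proof (per_n_charac q0 q1 q2 q3 q4 q_order t k H) as E.
  unfold Sg, Bg, Tg, per_X, per_u. rewrite E. split; [|split]; ring.
Qed.

Lemma eval0 (t : R) : q0 <= t < q4 ->
  Sg t = pw q1 q2 q3 S1 S2 S3 S4 t /\ Bg t = pw q1 q2 q3 B1 B2 B3 B4 t /\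
  Tg t = pw q1 q2 q3 T1 T2 T3 T4 t.
Proof.
  intros H. destruct (eval_at t 0) as [E1 [E2 E3]]. simpl. lra.
  simpl in E1, E2, E3. rewrite E1, E2, E3. replace (t - 0 * (q4 - q0)) with t by ring.
  split; [|split]; auto. ring.
Qed.

Lemma eval1 (t : R) : q0 <= t - (q4 - q0) < q4 ->
  Sg t = pw q1 q2 q3 S1 S2 S3 S4 (t - (q4 - q0)) /\ Bg t = pw q1 q2 q3 B1 B2 B3 B4 (t - (q4 - q0)) /\
  Tg t = pw q1 q2 q3 T1 T2 T3 T4 (t - (q4 - q0)) + Delta.
Proof.
  intros H. destruct (eval_at t 1) as [E1 [E2 E3]]. simpl. lra.
  simpl in E1, E2, E3. rewrite E1, E2, E3. rewrite !Rmult_1_l.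
  split; [|split]; auto.
Qed.

Lemma pw_first (f1 f2 f3 f4 : R -> R) (u : R) : u <= q1 -> pw q1 q2 q3 f1 f2 f3 f4 u = f1 u.
Proof. intros H. unfold pw. destruct Rle_dec; auto; lra. Qed.

Lemma Sg_0 : Sg 0 = M/4 /\ Bg 0 = Bn (M/4) /\ Tg 0 = GG (M/4).
Proof.
  destruct q_facts as [[? ?] [? ?]]. pose proof q_order.
  destruct (eval0 0) as [E1 [E2 E3]]. lra.
  rewrite E1, E2, E3, !pw_first by lra. unfold S1, B1, T1. rewrite psi_0. auto.
Qed.

Definition Per := q4 - q0.

Lemma Sg_P : Sg Per = M/4 /\ Bg Per = Bn (M/4) /\ Tg Per = GG (M/4) + Delta.
Proof.
  destruct q_facts as [[? ?] [? ?]]. pose proof q_order. unfold Per.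
  destruct (eval1 (q4 - q0)) as [E1 [E2 E3]]. lra.
  replace (q4 - q0 - (q4 - q0)) with 0 in * by ring.
  rewrite E1, E2, E3, !pw_first by lra. unfold S1, B1, T1. rewrite psi_0. auto.
Qed.

Lemma M4_bounds : PI/2 < M/4 < M/2 - PI/2.
Proof. pose proof PI_RGT_0. lra. Qed.

Lemma no_return (t : R) : 0 < t < Per -> ~ (Sg t = M/4 /\ 0 < sin (Bg t)).
Proof.
  intros Ht [ES Hsn].
  destruct q_facts as [[F1 F2] [F3 F4]]. pose proof q_order as [[O1 O2] [O3 O4]].
  pose proof M4_bounds.
  unfold Per in Ht.
  destruct (Rlt_le_dec t q4) as [L|G].
  - destruct (eval0 t) as [E1 [E2 _]]. lra.
    rewrite E1 in ES. rewrite E2 in Hsn. unfold pw in ES, Hsn.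
    destruct (Rle_dec t q1).
    + unfold S1 in ES. pose proof (psi_incr 0 t ltac:(lra) ltac:(lra) ltac:(lra)).
      rewrite psi_0 in H0. lra.
    + destruct (Rle_dec t q2).
      * unfold S2 in ES. assert (0 <= cos (t - (q1 + PI/2))) by (apply cap_tau; unfold q2 in *; lra).
        pose proof (Sc_range _ H0). lra.
      * destruct (Rle_dec t q3).
        -- unfold B3 in Hsn. rewrite sin_neg in Hsn.
           assert (I : inrng (KK - t)) by (apply inrng_q; pose proof KK_q2; pose proof KK_q3; lra).
           rewrite sin_Bn in Hsn by (apply inrng_region; auto).
           pose proof (FF_pos _ (inrng_region _ I)). lra.
        -- unfold S4 in ES. assert (0 <= cos (t - (q3 + PI/2))) by (apply cap_tau; unfold q4 in *; lra).
           pose proof (Sc_range _ H0). lra.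
  - destruct (eval1 t) as [E1 _]. lra.
    rewrite E1, pw_first in ES by lra. unfold S1 in ES.
    pose proof (psi_incr (t - (q4 - q0)) 0 ltac:(lra) ltac:(lra) ltac:(lra)).
    rewrite psi_0 in H0. lra.
Qed.

Lemma first_ret : first_return M Sg Bg Per.
Proof.
  destruct Sg_P as [E1 [E2 _]]. pose proof q_order as [[O1 O2] [O3 O4]].
  split; [unfold Per; lra|]. split; auto. split.
  - rewrite E2, sin_Bn by apply region_M4. apply FF_pos, region_M4.
  - exact no_return.
Qed.

Lemma geo : geodesic_solution r Sg Tg Bg.
Proof. intros t. split; [apply geo_S|split; [apply geo_B|apply geo_T]]. Qed.

Lemma Delta_eq : Delta = 2 * PI + 2 * RInt vI (PI/2) (M/2 - PI/2).
Proof.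
  unfold Delta, GG. 
  assert (Ex : forall a b, region a -> region b -> ex_RInt vI a b).
  { intros a b Ha Hb. apply (ex_RInt_continuous (V:=R_CompleteNormedModule)). intros z Hz.
    apply vI_cont. apply (region_between a b); auto. }
  pose proof key_points as [[K1 K2] [K3 K4]].
  assert (R2 : region (PI/2)) by (apply region_ab; lra).
  assert (R4 : region (M/2 - PI/2)) by (apply region_ab; lra).
  pose proof (RInt_Chasles (V:=R_CompleteNormedModule) vI (M/4) (PI/2) (M/2 - PI/2)
     (Ex _ _ region_M4 R2) (Ex _ _ R2 R4)) as C.
  simpl in C. unfold plus in C. simpl in C. rewrite <- C. ring.
Qed.

Theorem solution_exists : exists S Th B T,
  geodesic_solution r S Th B /\ S 0 = M/4 /\ 0 < sin (B 0) /\ cos (B 0) = c / r (M/4) /\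
  first_return M S B T /\ Th T - Th 0 = 2 * PI + 2 * RInt vI (PI/2) (M/2 - PI/2).
Proof.
  exists Sg, Tg, Bg, Per. destruct Sg_0 as [A1 [A2 A3]]. destruct Sg_P as [P1 [P2 P3]].
  split; [apply geo|]. split; auto. split; [|split; [|split]].
  - rewrite A2, sin_Bn by apply region_M4. apply FF_pos, region_M4.
  - rewrite A2. apply cos_Bn. apply region_M4.
  - apply first_ret.
  - rewrite P3, A3, Delta_eq. ring.
Qed.

End Neck.

Definition hh (rho y : R) := y / (rho * sqrt (rho ^ 2 - y ^ 2)).
Definition hd (rho y : R) := rho / ((rho ^ 2 - y ^ 2) * sqrt (rho ^ 2 - y ^ 2)).

Lemma hh_derive (rho y : R) : 0 < rho -> y ^ 2 < rho ^ 2 -> is_derive (hh rho) y (hd rho y).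
Proof.
  intros H1 H2. assert (H3 : 0 < rho ^ 2 - y ^ 2) by lra.
  assert (H4 : 0 < sqrt (rho ^ 2 - y ^ 2)) by (apply sqrt_lt_R0; auto).
  unfold hh, hd. auto_derive.
  - tidy. repeat split; try lra. apply Rgt_not_eq, Rmult_lt_0_compat; lra.
  - tidy. set (q := sqrt (rho ^ 2 - y ^ 2)) in *.
    assert (Hq : q ^ 2 = rho ^ 2 - y ^ 2) by (unfold q; rewrite pow2_sqrt; lra).
    field_simplify_eq. simpl in *. clearbody q. nsatz_clean.
    try (repeat split; try lra; apply Rgt_not_eq, Rmult_lt_0_compat; lra).
Qed.

Lemma hh_mvt (rho y1 y2 : R) : 0 < rho -> y1 ^ 2 < rho ^ 2 -> y2 ^ 2 < rho ^ 2 ->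
  exists xi, Rmin y1 y2 <= xi <= Rmax y1 y2 /\ hh rho y2 - hh rho y1 = hd rho xi * (y2 - y1).
Proof.
  intros H1 H2 H3.
  assert (Hb : forall z, Rmin y1 y2 <= z <= Rmax y1 y2 -> z ^ 2 < rho ^ 2).
  { intros z Hz. assert (-rho < y1 < rho) by nra. assert (-rho < y2 < rho) by nra.
    assert (-rho < z < rho) by (unfold Rmin, Rmax in Hz; destruct Rle_dec; lra). nra. }
  destruct (MVT_gen (hh rho) y1 y2 (hd rho)) as [xi [Hxi E]].
  - intros z Hz. apply hh_derive; auto. apply Hb. lra.
  - intros z Hz. apply continuity_pt_filterlim.
    apply (@ex_derive_continuous R_AbsRing R_NormedModule (hh rho) z).
    eexists. apply hh_derive; auto.
  - exists xi; auto.
Qed.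

Lemma hd_pos (rho y : R) : 0 < rho -> y ^ 2 < rho ^ 2 -> 0 < hd rho y.
Proof.
  intros H1 H2. unfold hd. assert (H3 : 0 < rho ^ 2 - y ^ 2) by lra.
  assert (H4 : 0 < sqrt (rho ^ 2 - y ^ 2)) by (apply sqrt_lt_R0; auto).
  apply Rdiv_lt_0_compat; auto. apply Rmult_lt_0_compat; auto.
Qed.

Lemma hd_le (rho y m c0 : R) : 0 < m -> m <= rho <= 1 -> y ^ 2 <= c0 ^ 2 -> c0 ^ 2 < m ^ 2 ->
  hd rho y <= / ((m ^ 2 - c0 ^ 2) * sqrt (m ^ 2 - c0 ^ 2)).
Proof.
  intros H0 H1 H2 H3. unfold hd.
  assert (D0 : 0 < m ^ 2 - c0 ^ 2) by lra.
  assert (D1 : m ^ 2 - c0 ^ 2 <= rho ^ 2 - y ^ 2) by nra.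
  assert (S0 : 0 < sqrt (m ^ 2 - c0 ^ 2)) by (apply sqrt_lt_R0; auto).
  assert (S1 : sqrt (m ^ 2 - c0 ^ 2) <= sqrt (rho ^ 2 - y ^ 2)) by (apply sqrt_le_1; lra).
  assert (P0 : 0 < (m ^ 2 - c0 ^ 2) * sqrt (m ^ 2 - c0 ^ 2)) by (apply Rmult_lt_0_compat; auto).
  assert (P1 : (m ^ 2 - c0 ^ 2) * sqrt (m ^ 2 - c0 ^ 2) <= (rho ^ 2 - y ^ 2) * sqrt (rho ^ 2 - y ^ 2))
    by (apply Rmult_le_compat; lra).
  unfold Rdiv. apply Rle_trans with (1 * / ((rho ^ 2 - y ^ 2) * sqrt (rho ^ 2 - y ^ 2))).
  - apply Rmult_le_compat_r; [|lra]. apply Rlt_le, Rinv_0_lt_compat. lra.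
  - rewrite Rmult_1_l. apply Rinv_le_contravar; auto.
Qed.

Section NNsec.
Variables (M : R) (r : R -> R).
Hypothesis Hr : forall x, ex_derive r x.
Hypothesis Hab : PI/2 < M/2 - PI/2.
Hypothesis Hbd : forall u, PI/2 <= u <= M/2 - PI/2 -> r (M/4) <= r u <= 1.
Hypothesis Hrm : 0 < r (M/4).

Definition NN (x : R) : R := RInt (vI r x) (PI/2) (M/2 - PI/2).

Lemma vI_cont2 (x u : R) : x ^ 2 < r (M/4) ^ 2 -> PI/2 <= u <= M/2 - PI/2 -> continuous (vI r x) u.
Proof.
  intros Hx Hu. pose proof (Hbd u Hu) as [B1 B2].
  assert (H3 : 0 < r u ^ 2 - x ^ 2) by nra.
  assert (H4 : 0 < sqrt (r u ^ 2 - x ^ 2)) by (apply sqrt_lt_R0; auto).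
  apply (@ex_derive_continuous R_AbsRing R_NormedModule (vI r x) u). unfold vI.
  auto_derive. tidy. repeat split; auto; try lra.
  apply Rgt_not_eq, Rmult_lt_0_compat; lra.
Qed.

Lemma vI_ex (x : R) : x ^ 2 < r (M/4) ^ 2 -> ex_RInt (vI r x) (PI/2) (M/2 - PI/2).
Proof.
  intros Hx. apply (ex_RInt_continuous (V:=R_CompleteNormedModule)). intros z Hz.
  apply vI_cont2; auto. rewrite Rmin_left, Rmax_right in Hz; lra.
Qed.

Lemma sq_lt_abs (x m : R) : 0 < m -> - m < x < m -> x ^ 2 < m ^ 2.
Proof. intros. nra. Qed.

Lemma NN_lt (x1 x2 : R) : - r (M/4) < x1 -> x1 < x2 -> x2 < r (M/4) -> NN x1 < NN x2.
Proof.
  intros H1 H2 H3. unfold NN.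
  assert (Q1 : x1 ^ 2 < r (M/4) ^ 2) by (apply sq_lt_abs; lra).
  assert (Q2 : x2 ^ 2 < r (M/4) ^ 2) by (apply sq_lt_abs; lra).
  apply RInt_lt; auto.
  - intros u Hu. apply vI_cont2; auto.
  - intros u Hu. apply vI_cont2; auto.
  - intros u Hu. assert (Hu' : PI/2 <= u <= M/2 - PI/2) by lra.
    pose proof (Hbd u Hu') as [B1 B2].
    assert (R1 : x1 ^ 2 < r u ^ 2) by (apply sq_lt_abs; lra).
    assert (R2 : x2 ^ 2 < r u ^ 2) by (apply sq_lt_abs; lra).
    destruct (hh_mvt (r u) x1 x2 ltac:(lra) R1 R2) as [xi [Hxi E]].
    rewrite Rmin_left, Rmax_right in Hxi by lra.
    assert (Rx : xi ^ 2 < r u ^ 2) by (apply sq_lt_abs; lra).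
    pose proof (hd_pos (r u) xi ltac:(lra) Rx).
    change (hh (r u) x1 < hh (r u) x2). nra.
Qed.

Lemma NN_odd (x : R) : x ^ 2 < r (M/4) ^ 2 -> NN (- x) = - NN x.
Proof.
  intros Hx.
  unfold NN. rewrite <- (RInt_opp (V:=R_CompleteNormedModule)).
  apply RInt_ext. intros u Hu. unfold vI. unfold opp; simpl.
  replace (- x * (- x * 1)) with (x * (x * 1)) by ring. apply Ropp_div.
  apply vI_ex; auto.
Qed.

Lemma NN_0 : NN 0 = 0.
Proof.
  unfold NN. rewrite (RInt_ext (V:=R_CompleteNormedModule) _ (fun _ => 0)).
  - rewrite (RInt_const (V:=R_CompleteNormedModule)). rewrite scal_R. apply Rmult_0_r.
  - intros u Hu. unfold vI, Rdiv. apply Rmult_0_l.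
Qed.

Lemma NN_lip (x y c0 : R) : 0 <= c0 < r (M/4) -> Rabs x <= c0 -> Rabs y <= c0 ->
  Rabs (NN y - NN x) <= (M/2 - PI/2 - PI/2) *
     (/ ((r (M/4) ^ 2 - c0 ^ 2) * sqrt (r (M/4) ^ 2 - c0 ^ 2)) * Rabs (y - x)).
Proof.
  intros Hc0 Hx Hy.
  assert (Qx : x ^ 2 <= c0 ^ 2) by (rewrite <- (pow2_abs x); apply pow_incr; split; [apply Rabs_pos|auto]).
  assert (Qy : y ^ 2 <= c0 ^ 2) by (rewrite <- (pow2_abs y); apply pow_incr; split; [apply Rabs_pos|auto]).
  assert (Qc : c0 ^ 2 < r (M/4) ^ 2) by nra.
  unfold NN.
  assert (E : RInt (vI r y) (PI/2) (M/2 - PI/2) - RInt (vI r x) (PI/2) (M/2 - PI/2) =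
              RInt (fun u => vI r y u - vI r x u) (PI/2) (M/2 - PI/2)).
  { rewrite (RInt_minus (V:=R_CompleteNormedModule)); auto; apply vI_ex; lra. }
  rewrite E. apply abs_RInt_le_const.
  - lra.
  - apply (ex_RInt_minus (V:=R_CompleteNormedModule)); apply vI_ex; lra.
  - intros u Hu. pose proof (Hbd u Hu) as [B1 B2].
    assert (R1 : x ^ 2 < r u ^ 2) by nra.
    assert (R2 : y ^ 2 < r u ^ 2) by nra.
    destruct (hh_mvt (r u) x y ltac:(lra) R1 R2) as [xi [Hxi E2]].
    change (Rabs (hh (r u) y - hh (r u) x) <=
      / ((r (M / 4) ^ 2 - c0 ^ 2) * sqrt (r (M / 4) ^ 2 - c0 ^ 2)) * Rabs (y - x)).
    rewrite E2, Rabs_mult.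
    assert (Qxi : xi ^ 2 <= c0 ^ 2).
    { rewrite <- (pow2_abs xi); apply pow_incr; split; [apply Rabs_pos|].
      unfold Rmin, Rmax in Hxi. destruct Rle_dec; apply Rabs_le; apply Rabs_le_between in Hx; apply Rabs_le_between in Hy; lra. }
    assert (Rx : xi ^ 2 < r u ^ 2) by nra.
    rewrite (Rabs_right (hd (r u) xi)) by (apply Rle_ge, Rlt_le, hd_pos; lra).
    apply Rmult_le_compat_r. apply Rabs_pos.
    apply hd_le; auto; lra.
Qed.

Lemma NN_cont (x0 : R) : - r (M/4) < x0 < r (M/4) -> continuity_pt NN x0.
Proof.
  intros Hx0.
  set (c0 := (Rabs x0 + r (M/4)) / 2).
  assert (Hax : Rabs x0 < r (M/4)) by (apply Rabs_def1; lra).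
  assert (Hc0 : 0 <= c0 < r (M/4)) by (pose proof (Rabs_pos x0); unfold c0; lra).
  set (K := (M/2 - PI/2 - PI/2) * / ((r (M/4) ^ 2 - c0 ^ 2) * sqrt (r (M/4) ^ 2 - c0 ^ 2))).
  assert (HK : 0 <= K).
  { unfold K. apply Rmult_le_pos; [lra|]. apply Rlt_le, Rinv_0_lt_compat.
    assert (0 < r (M/4) ^ 2 - c0 ^ 2) by nra.
    apply Rmult_lt_0_compat; auto. apply sqrt_lt_R0; auto. }
  unfold continuity_pt, continue_in, limit1_in, limit_in. intros eps Heps.
  assert (Hd : 0 < Rmin (c0 - Rabs x0) (eps / (K + 1))).
  { apply Rmin_pos. unfold c0; lra. apply Rdiv_lt_0_compat; lra. }
  exists (Rmin (c0 - Rabs x0) (eps / (K + 1))). split; auto.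
  intros x [_ Hx]. simpl in *. unfold R_dist in *.
  assert (H1 : Rabs (x - x0) < c0 - Rabs x0) by (eapply Rlt_le_trans; [exact Hx| apply Rmin_l]).
  assert (H2 : Rabs (x - x0) < eps / (K + 1)) by (eapply Rlt_le_trans; [exact Hx| apply Rmin_r]).
  assert (Hxa : Rabs x <= c0).
  { replace x with ((x - x0) + x0) by ring. eapply Rle_trans; [apply Rabs_triang|]. lra. }
  pose proof (NN_lip x0 x c0 Hc0 ltac:(unfold c0; lra) Hxa) as L.
  rewrite <- Rmult_assoc in L. fold K in L.
  eapply Rle_lt_trans; [exact L|].
  apply Rle_lt_trans with (K * (eps / (K + 1))).
  - apply Rmult_le_compat_l; lra.
  - apply Rlt_le_trans with ((K + 1) * (eps / (K + 1))).
    + apply Rmult_lt_compat_r. apply Rdiv_lt_0_compat; lra. lra.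
    + right. field. lra.
Qed.
End NNsec.

Lemma IZR_half (k k1 : Z) : IZR k = IZR k1 + 1/2 -> False.
Proof.
  intros H. assert (E : IZR (2 * k) = IZR (2 * k1 + 1)) by (rewrite !plus_IZR, !mult_IZR; simpl; lra).
  apply eq_IZR in E. lia.
Qed.

Lemma int_valued_const (g : R -> R) (lo hi : R) :
  lo <= hi -> (forall z, lo <= z <= hi -> continuity_pt g z) ->
  (forall z, lo <= z <= hi -> exists k : Z, g z = IZR k) -> g lo = g hi.
Proof.
  intros Hle Hc Hi.
  destruct (Req_dec lo hi) as [E|N]; [subst; auto|].
  destruct (Hi lo ltac:(lra)) as [k1 E1]. destruct (Hi hi ltac:(lra)) as [k2 E2].
  rewrite E1, E2. destruct (Z.lt_total k1 k2) as [L|[Q|G]].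
  - exfalso. assert (IZR k1 + 1 <= IZR k2) by (rewrite <- plus_IZR; apply IZR_le; lia).
    destruct (Ranalysis5.IVT_interv (fun z => g z - (IZR k1 + 1/2)) lo hi) as [z [Hz Ez]].
    + intros a Ha. apply continuity_pt_minus; auto. apply continuity_pt_const. intros ? ?; auto.
    + lra.
    + rewrite E1. lra.
    + rewrite E2. lra.
    + destruct (Hi z Hz) as [k Ek]. apply (IZR_half k k1). lra.
  - subst; auto.
  - exfalso. assert (IZR k2 + 1 <= IZR k1) by (rewrite <- plus_IZR; apply IZR_le; lia).
    destruct (Ranalysis5.IVT_interv (fun z => (IZR k2 + 1/2) - g z) lo hi) as [z [Hz Ez]].
    + intros a Ha. apply continuity_pt_minus; auto. apply continuity_pt_const. intros ? ?; auto.
    + lra.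
    + rewrite E1. lra.
    + rewrite E2. lra.
    + destruct (Hi z Hz) as [k Ek]. apply (IZR_half k k2). lra.
Qed.

Lemma reflect_geo (r S Th B : R -> R) : geodesic_solution r S Th B ->
  geodesic_solution r S (fun t => - Th t) (fun t => PI - B t).
Proof.
  intros H t. destruct (H t) as [D1 [D2 D3]]. split; [|split].
  - rewrite sin_PI_x. auto.
  - rewrite Rtrigo_facts.cos_pi_minus. apply is_derive_Reals in D2. apply is_derive_Reals.
    replace (Derive r (S t) / r (S t) * - cos (B t)) with (0 - Derive r (S t) / r (S t) * cos (B t)) by ring.
    apply derivable_pt_lim_minus. apply derivable_pt_lim_const. auto.
  - rewrite Rtrigo_facts.cos_pi_minus. apply is_derive_Reals in D3. apply is_derive_Reals.
    replace (- cos (B t) / r (S t)) with (- (cos (B t) / r (S t))) by (unfold Rdiv; ring).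
    apply derivable_pt_lim_opp. auto.
Qed.

Lemma reflect_fr (M : R) (S B : R -> R) (T : R) : first_return M S B T ->
  first_return M S (fun t => PI - B t) T.
Proof.
  intros [H1 [H2 [H3 H4]]]. split; auto. split; auto. split.
  - rewrite sin_PI_x; auto.
  - intros t Ht. rewrite sin_PI_x. apply H4; auto.
Qed.

Theorem mainTheorem2 (M : R) (r z f : R -> R) :
  model_sphere M r z ->
  rotation_function M r f ->
  forall a b : R, -1 < a -> a < b -> b < 1 -> f b < f a.
Proof.
  intros Hms Hrot a b Ha Hab Hb.
  destruct Hms as [Hsor [HM [Hsin [Hsym [Hcrit [Hr1 [Hr2 [Hrm Hbd]]]]]]]].
  destruct Hsor as [HM0 [Hsm_r _]].
  destruct Hrot as [Hfc [Hf0 Hfrot]].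
  pose proof PI_RGT_0 as HPI.
  assert (Hr : forall x, ex_derive r x) by (intros x; exact (Hsm_r 1%nat x)).
  assert (HDr : Derive r (PI/2) = 0) by (apply (Hcrit (PI/2)); [lra| left; auto]).
  assert (Hsym' : forall s, r (M/2 - s) = r s) by (intros s; apply Hsym).
  assert (Hmin : forall s, 0 < s < M/2 -> r (M/4) <= r s) by (intros s Hs; apply Hbd; auto).
  assert (Hab' : PI/2 < M/2 - PI/2) by lra.
  assert (Hbd' : forall u, PI/2 <= u <= M/2 - PI/2 -> r (M/4) <= r u <= 1) by (intros u Hu; apply Hbd; lra).
  set (L := 2 * PI * r (M/4)).
  set (H := fun eta => 2 * r (M/4) * NN M r (- r (M/4) * eta)).
  assert (Key : forall eta, -1 < eta < 1 -> exists k : Z, f eta = H eta + IZR k * L).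
  { intros eta Heta. unfold H.
    destruct (Rtotal_order eta 0) as [Neg|[Zer|Pos]].
    - set (c := - r (M/4) * eta).
      assert (Hc : 0 < c < r (M/4)) by (unfold c; nra).
      destruct (solution_exists M r c Hr Hsin Hsym' HM Hmin (proj2 Hrm) Hc HDr)
        as [S [Th [B [T [G1 [G2 [G3 [G4 [G5 G6]]]]]]]]].
      destruct (Hfrot eta Heta (Rlt_not_eq _ _ Neg) S Th B G1 G2 G3) with (T := T) as [k Hk]; auto.
      { rewrite G4. unfold c. field. lra. }
      exists (1 - k)%Z. rewrite minus_IZR. simpl.
      rewrite G6 in Hk. unfold NN. fold c. unfold L. lra.
    - exists 0%Z. subst eta. rewrite Hf0, Rmult_0_r, NN_0. simpl. ring.
    - set (c := r (M/4) * eta).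
      assert (Hc : 0 < c < r (M/4)) by (unfold c; nra).
      destruct (solution_exists M r c Hr Hsin Hsym' HM Hmin (proj2 Hrm) Hc HDr)
        as [S [Th [B [T [G1 [G2 [G3 [G4 [G5 G6]]]]]]]]].
      destruct (Hfrot eta Heta (Rgt_not_eq _ _ Pos) S (fun t => - Th t) (fun t => PI - B t)
         (reflect_geo r S Th B G1) G2) with (T := T) as [k Hk].
      { rewrite sin_PI_x. auto. }
      { rewrite Rtrigo_facts.cos_pi_minus, G4. unfold c. field. lra. }
      { apply reflect_fr; auto. }
      exists (- 1 - k)%Z. rewrite minus_IZR. simpl.
      replace (- r (M/4) * eta) with (- c) by (unfold c; ring).
      rewrite (NN_odd M r Hr Hab' Hbd' (proj1 Hrm)) by nra.
      unfold NN. unfold L.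
      assert (E : r (M/4) * (- Th T - - Th 0) = - (r (M/4) * (Th T - Th 0))) by ring.
      rewrite E, G6 in Hk. lra. }
  assert (Hcont : forall x, -1 < x < 1 -> continuity_pt (fun e => (f e - H e) / L) x).
  { intros x Hx. unfold H.
    assert (HL : L <> 0) by (unfold L; nra).
    apply continuity_pt_div; auto; [|apply continuity_pt_const; intros ? ?; auto].
    apply continuity_pt_minus.
    - apply continuity_pt_filterlim. apply Hfc; auto.
    - apply continuity_pt_scal.
      apply (continuity_pt_comp (fun e => - r (M/4) * e) (NN M r)).
      + apply continuity_pt_scal. apply derivable_continuous_pt. apply derivable_pt_id.
      + apply (NN_cont M r Hr Hab' Hbd' (proj1 Hrm)); nra. }
  assert (Hint : forall x, -1 < x < 1 -> exists k : Z, (f x - H x) / L = IZR k).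
  { intros x Hx. destruct (Key x Hx) as [k Hk]. exists k. rewrite Hk. unfold L. field. lra. }
  assert (H0 : (f 0 - H 0) / L = 0).
  { rewrite Hf0. unfold H. rewrite Rmult_0_r, NN_0. unfold Rdiv. ring. }
  assert (Eq : forall x, -1 < x < 1 -> f x = H x).
  { intros x Hx.
    assert (E : (f x - H x) / L = 0).
    { rewrite <- H0. destruct (Rle_lt_dec x 0) as [L1|L2].
      - apply (int_valued_const (fun e => (f e - H e) / L) x 0); auto.
        + intros y Hy. apply Hcont. lra.
        + intros y Hy. apply Hint. lra.
      - symmetry. apply (int_valued_const (fun e => (f e - H e) / L) 0 x); try lra.
        + intros y Hy. apply Hcont. lra.
        + intros y Hy. apply Hint. lra. }
    assert (HL : L <> 0) by (unfold L; nra).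
    unfold Rdiv in E. apply Rmult_integral in E. destruct E as [E|E].
    - lra.
    - exfalso. apply Rinv_neq_0_compat in HL. auto. }
  rewrite (Eq a), (Eq b) by lra. unfold H.
  assert (NN M r (- r (M/4) * b) < NN M r (- r (M/4) * a)).
  { apply (NN_lt M r Hr Hab' Hbd' (proj1 Hrm)); nra. }
  nra.
Qed.
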